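(* Let $(U_t)_{t\ge0}$ be a free unitary Lévy process in a noncommutative probability space $(\mathcal A,\phi)$. For $t\ge0$ let $j_t=j_{U_t}:U_n^{nc}\to E_{11}(\mathcal A\sqcup M_n(\mathbb C))E_{11}$, i.e. $j_t(u_{ij})=E_{1i}U_tE_{j1}$. Then $(j_t)_{t\ge0}$ is a free Lévy process on $U\langle n\rangle$ over the noncommutative probability space $\big(E_{11}(\mathcal A\sqcup M_n(\mathbb C))E_{11},\,n(\phi*\mathrm{tr}_n)\big)$.
   Context: A free unitary Lévy process is a family $(U_t)_{t\ge0}$ of unitaries in $(\mathcal A,\phi)$ with $U_0=1$, the distribution of $U_s^{-1}U_t$ depending only on $t-s$ ($0\le s\le t$), $U_{t_1},U_{t_1}^{-1}U_{t_2},\dots,U_{t_{k-1}}^{-1}U_{t_k}$ $*$-free for $0\le t_1\le\dots\le t_k$, and the distribution of $U_t$ converging weakly to $\delta_1$ as $t\to0$. $U_n^{nc}$ is the universal unital $*$-algebra generated by $u_{ij}$ with $\sum_ku_{ki}^*u_{kj}=\delta_{ij}=\sum_ku_{ik}u_{jk}^*$; $\Delta(u_{ij})=\sum_ku^{(1)}_{ik}u^{(2)}_{kj}$, $\delta(u_{ij})=\delta_{ij}$, $\Sigma(u_{ij})=u_{ji}^*$; $j_1\star j_2=(j_1\sqcup j_2)\circ\Delta$ for unital $*$-homomorphisms $j_1,j_2$ from $U_n^{nc}$. A free Lévy process on $U\langle n\rangle$ over $(\mathcal B,\psi)$ is a family of unital $*$-homomorphisms $j_t:U_n^{nc}\to\mathcal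 B$ with $j_0=\delta(\cdot)1_{\mathcal B}$; $\psi\circ((j_s\circ\Sigma)\star j_t)=\psi\circ j_{t-s}$ for $s\le t$; for $0\le t_1\le\dots\le t_k$ the images of $j_{t_1},(j_{t_1}\circ\Sigma)\star j_{t_2},\dots,(j_{t_{k-1}}\circ\Sigma)\star j_{t_k}$ are $*$-free in $(\mathcal B,\psi)$; and $\psi(j_s(b))\to\delta(b)$ as $s\to0$ for all $b$. $E_{ij}$ are matrix units, $\mathrm{tr}_n$ normalized trace, $\phi*\mathrm{tr}_n$ the free product state on the free product $\mathcal A\sqcup M_n(\mathbb C)$, and $E_{11}(\mathcal A\sqcup M_n(\mathbb C))E_{11}$ has unit $E_{11}$. *)

(* Defs.v *)
From Stdlib Require Import Rdefinitions.
From HB Require Import structures.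
From mathcomp Require Import all_boot all_order all_algebra.
Set Implicit Arguments. Unset Strict Implicit. Unset Printing Implicit Defensive.
Import Order.TTheory GRing.Theory Num.Theory.
Local Open Scope ring_scope.

Section Defs.
Variable C : numClosedFieldType.

Definition is_star (A : lalgType C) (st : A -> A) : Prop :=
  [/\ forall x, st (st x) = x,
      forall x y, st (x * y) = st y * st x &
      forall (a : C) x y, st (a *: x + y) = (Num.conj a) *: st x + st y].

Definition is_state (A : lalgType C) (phi : A -> C) : Prop :=
  (forall (a : C) x y, phi (a *: x + y) = a * phi x + phi y) /\ phi 1 = 1.

(* The unital *-subalgebra generated by S inside the *-algebra with unit
   [one] (one = 1 for the whole algebra, one = a projection for a corner). *)
Inductive salg (A : lalgType C) (one : A) (st : A -> A) (S : A -> Prop) : A -> Prop :=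
  | salg_gen x : S x -> salg one st S x
  | salg_one : salg one st S one
  | salg_add x y : salg one st S x -> salg one st S y -> salg one st S (x + y)
  | salg_scale (a : C) x : salg one st S x -> salg one st S (a *: x)
  | salg_mul x y : salg one st S x -> salg one st S y -> salg one st S (x * y)
  | salg_star x : salg one st S x -> salg one st S (st x).

Definition free_family (A : lalgType C) (phi : A -> C) (Fs : seq (A -> Prop)) : Prop :=
  forall s : seq (nat * A),
    s != [::] ->
    (forall p, p \in s ->
       [/\ (p.1 < size Fs)%N, nth (fun _ => False) Fs p.1 p.2 & phi p.2 = 0]) ->
    path (fun p q : nat * A => p.1 != q.1) (head (0%N, 0) s) (behead s) ->
    phi (\prod_(p <- s) p.2) = 0.

Definition star_word (A : lalgType C) (st : A -> A) (x : A) (w : seq bool) : A :=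
  \prod_(b <- w) (if b then st x else x).

Definition same_dist (A : lalgType C) (st : A -> A) (phi : A -> C) (x y : A) : Prop :=
  forall w : seq bool, phi (star_word st x w) = phi (star_word st y w).

Definition unitary (A : lalgType C) (st : A -> A) (u : A) : Prop :=
  st u * u = 1 /\ u * st u = 1.

Definition ordered_times (ts : seq R) : Prop :=
  (forall i, (i < size ts)%N -> Rle R0 (nth R0 ts i)) /\
  (forall i, (i.+1 < size ts)%N -> Rle (nth R0 ts i) (nth R0 ts i.+1)).

Definition increments (X : Type) (f : R -> X) (g : R -> R -> X) (ts : seq R) : seq X :=
  match ts with
  | [::] => [::]
  | t1 :: rest => f t1 :: pairmap g t1 rest
  end.

Definition free_unitary_levy (A : lalgType C) (st : A -> A) (phi : A -> C)
    (U : R -> A) : Prop :=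
  [/\ forall t, Rle R0 t -> unitary st (U t),
      U R0 = 1,
      (forall s t s' t', Rle R0 s -> Rle s t -> Rle R0 s' -> Rle s' t' ->
          Rminus t s = Rminus t' s' ->
          same_dist st phi (st (U s) * U t) (st (U s') * U t')),
      (forall ts, ordered_times ts ->
          free_family phi
            [seq salg 1 st (fun y => y = x) | x <- increments U (fun s t => st (U s) * U t) ts]) &
      (forall (w : seq bool) (eps : C), 0 < eps ->
          exists d : R, Rlt R0 d /\
            forall t, Rlt R0 t -> Rlt t d -> `|phi (star_word st (U t) w) - 1| < eps)].

(* Elements of U_n^nc are represented by formal *-polynomial terms in the
   generators u_ij; a unital *-homomorphism j : U_n^nc -> B is determined by
   the matrix W i k = j(u_ik) of generator images (which must satisfy the
   defining relations), and j acts on a term by evaluation. *)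
Inductive ncterm (n : nat) : Type :=
  | NGen of 'I_n & 'I_n
  | NOne
  | NAdd of ncterm n & ncterm n
  | NScale of C & ncterm n
  | NMul of ncterm n & ncterm n
  | NStar of ncterm n.

Fixpoint nceval (B : lalgType C) (one : B) (st : B -> B) (n : nat)
    (W : 'I_n -> 'I_n -> B) (b : ncterm n) : B :=
  match b with
  | NGen i k => W i k
  | NOne => one
  | NAdd x y => nceval one st W x + nceval one st W y
  | NScale a x => a *: nceval one st W x
  | NMul x y => nceval one st W x * nceval one st W y
  | NStar x => st (nceval one st W x)
  end.

Fixpoint nccounit (n : nat) (b : ncterm n) : C :=
  match b with
  | NGen i k => (i == k)%:R
  | NOne => 1
  | NAdd x y => nccounit x + nccounit y
  | NScale a x => a * nccounit x
  | NMul x y => nccounit x * nccounit y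
  | NStar x => Num.conj (nccounit x)
  end.

Definition unc_hom (B : lalgType C) (st : B -> B) (one : B) (n : nat)
    (W : 'I_n -> 'I_n -> B) : Prop :=
  [/\ forall i k, one * W i k * one = W i k,
      forall i k, \sum_l st (W l i) * W l k = (i == k)%:R *: one &
      forall i k, \sum_l W i l * st (W k l) = (i == k)%:R *: one].

(* generator images of j o Sigma  (Sigma(u_ij) = u_ji^* ) *)
Definition antipode_gen (B : lalgType C) (st : B -> B) (n : nat)
    (W : 'I_n -> 'I_n -> B) : 'I_n -> 'I_n -> B :=
  fun i k => st (W k i).

(* generator images of j1 * j2 = (j1 |_| j2) o Delta *)
Definition conv_gen (B : lalgType C) (n : nat) (W1 W2 : 'I_n -> 'I_n -> B) :
    'I_n -> 'I_n -> B :=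
  fun i k => \sum_l W1 i l * W2 l k.

Definition hom_image (B : lalgType C) (one : B) (st : B -> B) (n : nat)
    (W : 'I_n -> 'I_n -> B) : B -> Prop :=
  fun x => exists b : ncterm n, x = nceval one st W b.

Definition free_levy_Un (B : lalgType C) (st : B -> B) (one : B) (psi : B -> C)
    (n : nat) (j : R -> 'I_n -> 'I_n -> B) : Prop :=
  [/\ forall t, Rle R0 t -> unc_hom st one (j t),
      (forall i k, j R0 i k = (i == k)%:R *: one),
      (forall s t, Rle R0 s -> Rle s t -> forall b : ncterm n,
          psi (nceval one st (conv_gen (antipode_gen st (j s)) (j t)) b)
          = psi (nceval one st (j (Rminus t s)) b)),
      (forall ts, ordered_times ts ->
          free_family psi
            [seq hom_image one st W
               | W <- increments j (fun s t => conv_gen (antipode_gen st (j s)) (j t)) ts]) &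
      (forall (b : ncterm n) (eps : C), 0 < eps ->
          exists d : R, Rlt R0 d /\
            forall s, Rlt R0 s -> Rlt s d ->
              `|psi (nceval one st (j s) b) - nccounit b| < eps)].

End Defs.

(* Main.v *)
Require Import Defs.
From Stdlib Require Import Rdefinitions FunctionalExtensionality Lra Rbasic_fun.
From HB Require Import structures.
From mathcomp Require Import all_boot all_order all_algebra.
From mathcomp Require Import ring.
Import Order.TTheory GRing.Theory Num.Theory.
Local Open Scope ring_scope.
Set Implicit Arguments. Unset Strict Implicit. Unset Printing Implicit Defensive.

Section StarLemmas.
Variable C : numClosedFieldType.
Variable A : lalgType C.
Variable st : A -> A.
Hypothesis hst : is_star st.

Lemma st_invol x : st (st x) = x. Proof. by case: hst. Qed.
Lemma st_mul x y : st (x * y) = st y * st x. Proof. by case: hst. Qed.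
Lemma st_add x y : st (x + y) = st x + st y.
Proof. case: hst => _ _ h; by rewrite -[x]scale1r h conjC1 !scale1r. Qed.
Lemma st0 : st 0 = 0.
Proof. have h := st_add 0 0; rewrite addr0 in h; by apply: (addrI (st 0)); rewrite addr0 -h. Qed.
Lemma st_scale a x : st (a *: x) = (Num.conj a) *: st x.
Proof. case: hst => _ _ h; by rewrite -[a *: x]addr0 h st0 addr0. Qed.
Lemma st_opp x : st (- x) = - st x.
Proof. by rewrite -scaleN1r st_scale conjCN1 scaleN1r. Qed.
Lemma st_sub x y : st (x - y) = st x - st y.
Proof. by rewrite st_add st_opp. Qed.
Lemma st1 : st 1 = 1.
Proof. have := st_mul (st 1) 1; rewrite mulr1 !st_invol mulr1; by move=> h; rewrite -h. Qed.
Lemma st_inj : injective st.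
Proof. by move=> x y h; rewrite -(st_invol x) h st_invol. Qed.
Lemma mulrZ (x : A) (a : C) (y : A) : x * (a *: y) = a *: (x * y).
Proof.
apply: st_inj; rewrite st_mul !st_scale st_mul scalerAl //.
Qed.
Lemma st_sum (I : Type) (r : seq I) (P : pred I) (F : I -> A) :
  st (\sum_(i <- r | P i) F i) = \sum_(i <- r | P i) st (F i).
Proof. by apply: (big_morph st st_add st0). Qed.
Lemma st_prod (r : seq A) : st (\prod_(x <- r) x) = \prod_(x <- rev r) st x.
Proof.
elim: r => [|x r IH]; first by rewrite !big_nil st1.
by rewrite big_cons st_mul IH rev_cons -cats1 big_cat big_seq1.
Qed.
End StarLemmas.

Section StateLemmas.
Variable C : numClosedFieldType.
Variable A : lalgType C.
Variable phi : A -> C.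
Hypothesis hphi : is_state phi.

Lemma ph_add x y : phi (x + y) = phi x + phi y.
Proof. case: hphi => h _; have := h 1 x y; by rewrite scale1r mul1r. Qed.
Lemma ph0 : phi 0 = 0.
Proof. have h := ph_add 0 0; rewrite addr0 in h; by apply: (addrI (phi 0)); rewrite addr0 -h. Qed.
Lemma ph_scale a x : phi (a *: x) = a * phi x.
Proof. case: hphi => h _; by rewrite -[a *: x]addr0 h ph0 addr0. Qed.
Lemma ph1 : phi 1 = 1. Proof. by case: hphi. Qed.
Lemma ph_opp x : phi (- x) = - phi x.
Proof. by rewrite -scaleN1r ph_scale mulN1r. Qed.
Lemma ph_sub x y : phi (x - y) = phi x - phi y.
Proof. by rewrite ph_add ph_opp. Qed.
Lemma ph_sum (I : Type) (r : seq I) (P : pred I) (F : I -> A) :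
  phi (\sum_(i <- r | P i) F i) = \sum_(i <- r | P i) phi (F i).
Proof. by apply: (big_morph phi ph_add ph0). Qed.
End StateLemmas.

Section Tends.
Variable C : numClosedFieldType.
Lemma mul_bound (u v f0 g0 e1 : C) : `|u| < e1 -> `|v| < e1 -> e1 <= 1 ->
  `|u * v + u * g0 + f0 * v| < e1 * (1 + `|g0| + `|f0|).
Proof.
move=> hu hv he.
apply: (le_lt_trans (ler_normD _ _)).
have -> : e1 * (1 + `|g0| + `|f0|) = (e1 * 1 + e1 * `|g0|) + `|f0| * e1 by ring.
apply: ltr_leD.
- apply: (le_lt_trans (ler_normD _ _)); apply: ltr_leD.
  + rewrite normrM; apply: ltr_pM => //; exact: (lt_le_trans hv he).
  + rewrite normrM; apply: ler_pM => //; exact: ltW.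
- rewrite normrM; apply: ler_pM => //; exact: ltW.
Qed.

Lemma e1_props (eps K : C) : 0 < eps -> 1 <= K ->
  0 < eps / (K + eps) /\ eps / (K + eps) <= 1 /\ eps / (K + eps) * K <= eps.
Proof.
move=> he hK.
have hK0 : 0 < K by apply: lt_le_trans hK; exact: ltr01.
have hKe : 0 < K + eps by apply: addr_gt0.
split; first by apply: divr_gt0.
split; first by rewrite ler_pdivrMr // mul1r lerDr ltW.
rewrite mulrAC ler_pdivrMr // ler_pM2l // lerDl ltW //.
Qed.


Definition tends (f : R -> C) (l : C) :=
  forall eps : C, 0 < eps -> exists d : R, Rlt R0 d /\
    forall s, Rlt R0 s -> Rlt s d -> `|f s - l| < eps.

Lemma tends_const a : tends (fun _ => a) a.
Proof. move=> eps he; exists R1; split; first lra. by move=> s _ _; rewrite subrr normr0. Qed.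

Lemma tends_add f g a b : tends f a -> tends g b -> tends (fun s => f s + g s) (a + b).
Proof.
move=> hf hg eps he.
have he2 : 0 < eps / 2 by apply: divr_gt0 => //; exact: ltr0Sn.
case: (hf _ he2) => d1 [hd1 h1]; case: (hg _ he2) => d2 [hd2 h2].
exists (Rmin d1 d2); split; first exact: Rmin_pos.
move=> s hs hsd.
have hs1 : Rlt s d1 by have := Rmin_l d1 d2; lra.
have hs2 : Rlt s d2 by have := Rmin_r d1 d2; lra.
have -> : f s + g s - (a + b) = (f s - a) + (g s - b) by ring.
apply: (le_lt_trans (ler_normD _ _)).
rewrite [eps](splitr eps); apply: ltrD; [exact: h1 | exact: h2].
Qed.

Lemma tends_mul f g a b : tends f a -> tends g b -> tends (fun s => f s * g s) (a * b).
Proof.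
move=> hf hg eps he.
have hK : 1 <= 1 + `|b| + `|a| by rewrite -addrA lerDl addr_ge0.
case: (e1_props he hK) => he0 [he1 he2].
case: (hf _ he0) => d1 [hd1 h1]; case: (hg _ he0) => d2 [hd2 h2].
exists (Rmin d1 d2); split; first exact: Rmin_pos.
move=> s hs hsd.
have hs1 : Rlt s d1 by have := Rmin_l d1 d2; lra.
have hs2 : Rlt s d2 by have := Rmin_r d1 d2; lra.
have -> : f s * g s - a * b = (f s - a) * (g s - b) + (f s - a) * b + a * (g s - b) by ring.
apply: (lt_le_trans (mul_bound _ _ (h1 _ hs hs1) (h2 _ hs hs2) he1)).
exact: he2.
Qed.
End Tends.
Section Main.
Variable C : numClosedFieldType.
Variable A : lalgType C.
Variables (starA : A -> A) (phi : A -> C).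
Hypotheses (hstarA : is_star starA) (hphi : is_state phi).
Variable U : R -> A.
Hypothesis hU : free_unitary_levy starA phi U.
Variable n : nat.
Hypothesis hn : (0 < n)%N.
Variable B : lalgType C.
Variables (starB : B -> B) (psi : B -> C).
Hypotheses (hstarB : is_star starB) (hpsi : is_state psi).
Variable iA : A -> B.
Hypothesis hiA1 : iA 1 = 1.
Hypothesis hiAM : forall x y, iA (x * y) = iA x * iA y.
Hypothesis hiAL : forall (a : C) x y, iA (a *: x + y) = a *: iA x + iA y.
Hypothesis hiAS : forall x, iA (starA x) = starB (iA x).
Hypothesis hiAphi : forall x, psi (iA x) = phi x.
Variable E : 'I_n -> 'I_n -> B.
Hypothesis hEM : forall i j k l, E i j * E k l = (j == k)%:R *: E i l.
Hypothesis hE1 : \sum_i E i i = 1.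
Hypothesis hES : forall i j, starB (E i j) = E j i.
Hypothesis hEtr : forall i j, psi (E i j) = (i == j)%:R / n%:R.
Hypothesis hfree : free_family psi
     [:: salg 1 starB (fun x => exists a, x = iA a);
         salg 1 starB (fun x => exists i j, x = E i j)].

Let e1 := Ordinal hn.

Lemma iA_add x y : iA (x + y) = iA x + iA y.
Proof. by have := hiAL 1 x y; rewrite !scale1r. Qed.
Lemma iA0 : iA 0 = 0.
Proof. have h := iA_add 0 0; rewrite addr0 in h; by apply: (addrI (iA 0)); rewrite addr0 -h. Qed.
Lemma iA_scale a x : iA (a *: x) = a *: iA x.
Proof. by have := hiAL a x 0; rewrite !addr0 iA0 addr0. Qed.
Lemma iA_sub x y : iA (x - y) = iA x - iA y.
Proof. have h := hiAL (-1) y x; rewrite !scaleN1r in h; by rewrite [x - y]addrC h addrC. Qed.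

Lemma EE i j k l : E i j * E k l = if j == k then E i l else 0.
Proof. by rewrite hEM; case: eqP => _; rewrite ?scale1r ?scale0r. Qed.
Lemma EEs i j l : E i j * E j l = E i l.
Proof. by rewrite EE eqxx. Qed.

Lemma mulZB (x : B) (a : C) (y : B) : x * (a *: y) = a *: (x * y).
Proof. exact: (mulrZ hstarB). Qed.

Lemma sum_EE (a b : B) : \sum_l a * E l e1 * (E e1 l * b) = a * b.
Proof.
rewrite (eq_bigr (fun l => a * E l l * b)); last first.
  by move=> l _; rewrite mulrA -(mulrA a) EEs.
by rewrite -mulr_suml -mulr_sumr hE1 mulr1.
Qed.

Definition W (X : B) : 'I_n -> 'I_n -> B := fun i k => E e1 i * X * E k e1.

Lemma st_W X i k : starB (W X i k) = W (starB X) k i.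
Proof. rewrite /W !(st_mul hstarB) !hES. by rewrite mulrA. Qed.

Lemma conv_W X Y i k : conv_gen (antipode_gen starB (W X)) (W Y) i k = W (starB X * Y) i k.
Proof.
rewrite /conv_gen /antipode_gen.
rewrite (eq_bigr (fun l => (E e1 i * starB X) * E l e1 * (E e1 l * (Y * E k e1)))).
  by rewrite sum_EE /W !mulrA.
by move=> l _; rewrite st_W /W !mulrA.
Qed.
Lemma sumWW X Y i k : \sum_l W X i l * W Y l k = W (X * Y) i k.
Proof.
rewrite (eq_bigr (fun l => (E e1 i * X) * E l e1 * (E e1 l * (Y * E k e1)))).
  by rewrite sum_EE /W !mulrA.
by move=> l _; rewrite /W !mulrA.
Qed.

Lemma W1 i k : W 1 i k = (i == k)%:R *: E e1 e1.
Proof. by rewrite /W mulr1 hEM. Qed.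

Lemma EEs' (a : B) i j l : a * E i j * E j l = a * E i l.
Proof. by rewrite -mulrA EEs. Qed.

Lemma W_corner X i k : E e1 e1 * W X i k * E e1 e1 = W X i k.
Proof. by rewrite /W !mulrA EEs EEs'. Qed.

Lemma W_unc X : starB X * X = 1 -> X * starB X = 1 -> unc_hom starB (E e1 e1) (W X).
Proof.
move=> h1 h2; split.
- exact: W_corner.
- move=> i k; under eq_bigr => l _ do rewrite st_W.
  by rewrite sumWW h1 W1.
- move=> i k; under eq_bigr => l _ do rewrite st_W.
  by rewrite sumWW h2 W1.
Qed.

Definition Dspan (d : B) := forall i j, exists c : C, E i i * d * E j j = c *: E i j.

Lemma EdE d i j : E i i * d * E j j = E i i * (E i i * d * E j j) * E j j.
Proof. by rewrite !mulrA EEs -!mulrA EEs. Qed.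

Lemma Dspan_E k l : Dspan (E k l).
Proof.
move=> i j; exists ((i == k)%:R * (l == j)%:R).
by rewrite hEM -scalerAl hEM scalerA.
Qed.

Lemma Dspan1 : Dspan 1.
Proof. move=> i j; exists (i == j)%:R; by rewrite mulr1 hEM. Qed.

Lemma Dspan_add d d' : Dspan d -> Dspan d' -> Dspan (d + d').
Proof.
move=> h h' i j; case: (h i j) => c hc; case: (h' i j) => c' hc'.
by exists (c + c'); rewrite mulrDr mulrDl hc hc' scalerDl.
Qed.

Lemma Dspan_scale a d : Dspan d -> Dspan (a *: d).
Proof.
move=> h i j; case: (h i j) => c hc; exists (a * c).
by rewrite mulZB -scalerAl hc scalerA.
Qed.

Lemma Dspan_sub d d' : Dspan d -> Dspan d' -> Dspan (d - d').
Proof. by move=> h h'; apply: Dspan_add => //; rewrite -scaleN1r; apply: Dspan_scale. Qed.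

Lemma Dspan0 : Dspan 0.
Proof. by rewrite -(scale0r 1); apply: Dspan_scale; apply: Dspan1. Qed.

Lemma Dspan_mul d d' : Dspan d -> Dspan d' -> Dspan (d * d').
Proof.
move=> hd hd' i j.
have -> : E i i * (d * d') * E j j = \sum_k (E i i * d * E k k) * (E k k * d' * E j j).
  have -> : d * d' = \sum_k d * E k k * d'.
    by rewrite -mulr_suml -mulr_sumr hE1 mulr1.
  rewrite mulr_sumr mulr_suml; apply: eq_bigr => k _.
  by rewrite !mulrA EEs'.
apply: (big_ind (fun x => exists c, x = c *: E i j)).
- by exists 0; rewrite scale0r.
- by move=> x y [c ->] [c' ->]; exists (c + c'); rewrite scalerDl.
- move=> k _; case: (hd i k) => c ->; case: (hd' k j) => c' ->.
  by exists (c * c'); rewrite -scalerAl mulZB EEs scalerA.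
Qed.

Lemma Dspan_star d : Dspan d -> Dspan (starB d).
Proof.
move=> h i j; case: (h j i) => c hc; exists (Num.conj c).
have -> : E i i * starB d * E j j = starB (E j j * d * E i i).
  by rewrite !(st_mul hstarB) !hES mulrA.
by rewrite hc (st_scale hstarB) hES.
Qed.

Definition Egen := (fun x : B => exists i j, x = E i j).
Definition Agen := (fun x : B => exists a, x = iA a).

Lemma salg_sum (S : B -> Prop) (I : Type) (r : seq I) (F : I -> B) :
  (forall i, salg 1 starB S (F i)) -> salg 1 starB S (\sum_(i <- r) F i).
Proof.
move=> h; apply: (big_ind (salg 1 starB S)) => //.
- by rewrite -(scale0r 1); apply: salg_scale; apply: salg_one.
- by move=> x y; apply: salg_add.
Qed.

Lemma Dspan_salg d : Dspan d -> salg 1 starB Egen d.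
Proof.
move=> h.
have -> : d = \sum_i \sum_j E i i * d * E j j.
  symmetry; under eq_bigr => i _ do rewrite -mulr_sumr hE1 mulr1.
  by rewrite -mulr_suml hE1 mul1r.
apply: salg_sum => i; apply: salg_sum => j.
case: (h i j) => c ->; apply: salg_scale; apply: salg_gen; by exists i, j.
Qed.

Definition Ds := {d : B | Dspan d}.
Definition item := (Ds + seq bool)%type.
Definition sw (X : B) (w : seq bool) := star_word starB X w.
Definition evI (X : B) (it : item) : B :=
  match it with inl d => sval d | inr w => sw X w end.
Definition evF X (L : seq item) := \prod_(it <- L) evI X it.
Definition isD (it : item) := if it is inl _ then true else false.
Fixpoint altF (L : seq item) : bool :=
  match L with
  | a :: ((b :: _) as l) => (isD a != isD b) && altF l
  | _ => true
  end.
Definition dmul (d d' : Ds) : Ds :=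
  exist _ (sval d * sval d') (Dspan_mul (svalP d) (svalP d')).

Definition merge (it : item) (l : seq item) : seq item :=
  match l with
  | [::] => [:: it]
  | it' :: l' =>
     match it, it' with
     | inl d, inl d' => inl (dmul d d') :: l'
     | inr w, inr w' => inr (w ++ w') :: l'
     | _, _ => it :: it' :: l'
     end
  end.

Fixpoint normF (L : seq item) : seq item :=
  match L with
  | [::] => [::]
  | it :: l => merge it (normF l)
  end.

Lemma sw_cat X w w' : sw X (w ++ w') = sw X w * sw X w'.
Proof. by rewrite /sw /star_word big_cat. Qed.

Lemma evF_cons X it l : evF X (it :: l) = evI X it * evF X l.
Proof. by rewrite /evF big_cons. Qed.

Lemma evF_merge X it l : evF X (merge it l) = evI X it * evF X l.
Proof.
case: l => [|it' l] /=; first by rewrite /evF !big_cons big_nil.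
case: it => [d|w]; case: it' => [d'|w'] //=; rewrite !evF_cons /= ?mulrA //.
by rewrite sw_cat.
Qed.

Lemma normF_ev X L : evF X (normF L) = evF X L.
Proof. elim: L => [|it l IH] //=; by rewrite evF_merge IH evF_cons. Qed.

Lemma size_merge it l : (size (merge it l) <= (size l).+1)%N.
Proof. case: l => [|it' l] //=; case: it => [d|w]; case: it' => [d'|w'] //=. Qed.

Lemma normF_size L : (size (normF L) <= size L)%N.
Proof.
elim: L => [|it l IH] //=.
by apply: leq_trans (size_merge _ _) _.
Qed.

Lemma altF_kind x y l : isD x = isD y -> altF (x :: l) = altF (y :: l).
Proof. by case: l => [|z l] //= ->. Qed.

Lemma altF_cons x l : altF (x :: l) -> altF l.
Proof. by case: l => [|z l] //= /andP[]. Qed.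

Lemma merge_alt it l : altF l -> altF (merge it l).
Proof.
case: l => [|it' l] //=.
by case: it => [d|w]; case: it' => [d'|w'] //= h.
Qed.

Lemma normF_alt L : altF (normF L).
Proof. elim: L => [|it l IH] //=; exact: merge_alt. Qed.

Lemma sw_iA x w : sw (iA x) w = iA (star_word starA x w).
Proof.
elim: w => [|b w IH]; first by rewrite /sw /star_word !big_nil hiA1.
rewrite /sw /star_word !big_cons -/(star_word _ _ _) -/(sw _ _) IH hiAM.
by case: b => //; rewrite hiAS.
Qed.

Fixpoint bools (k : nat) : seq (seq bool) :=
  if k is k'.+1 then [seq true :: s | s <- bools k'] ++ [seq false :: s | s <- bools k']
  else [:: [::]].

Lemma expand (T : Type) (a : T -> B) (c : T -> C) (L : seq T) :
  \prod_(t <- L) (a t - c t *: 1) =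
  \sum_(s <- bools (size L))
     (\prod_(q <- zip s L | ~~ q.1) (- c q.2)) *: \prod_(t <- mask s L) a t.
Proof.
elim: L => [|t L IH].
  by rewrite /= big_seq1 !big_nil scale1r.
rewrite big_cons IH mulr_sumr /= big_cat !big_map.
rewrite (eq_bigr (fun s =>
   (\prod_(q <- (true, t) :: zip s L | ~~ q.1) - c q.2 *: \prod_(t0 <- mask (true :: s) (t :: L)) a t0)
 + (\prod_(q <- (false, t) :: zip s L | ~~ q.1) - c q.2 *: \prod_(t0 <- mask (false :: s) (t :: L)) a t0))).
  by rewrite big_split.
move=> s _.
rewrite !big_cons /= ?big_cons mulrBl mulZB -scalerAl mul1r scalerA.
by rewrite mulNr scaleNr -scaleNr.
Qed.

Definition idxI (it : item) : nat := if isD it then 1%N else 0%N.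

Lemma alt_path (f : item -> B) it l : altF (it :: l) ->
  path (fun p q : nat * B => p.1 != q.1) (idxI it, f it) [seq (idxI j, f j) | j <- l].
Proof.
elim: l it => [|y l IH] z //.
move=> hz; have h1 : isD z != isD y by case/andP: hz.
have h2 : altF (y :: l) by case/andP: hz.
rewrite /=; apply/andP; split; last exact: IH.
by move: h1; clear hz h2 IH; case: z => [d|w]; case: y => [d'|w'].
Qed.

Lemma in_map_ex (T1 : Type) (T2 : eqType) (f : T1 -> T2) s y :
  y \in map f s -> exists x, y = f x.
Proof.
elim: s => [|a s IH] //=; rewrite inE => /orP [/eqP ->|/IH //]; by exists a.
Qed.

Lemma freeF (x : A) (L : seq item) : L <> [::] -> altF L ->
  psi (\prod_(it <- L) (evI (iA x) it - psi (evI (iA x) it) *: 1)) = 0.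
Proof.
move=> hL hA.
have -> : \prod_(it <- L) (evI (iA x) it - psi (evI (iA x) it) *: 1) =
   \prod_(p <- [seq (idxI it, evI (iA x) it - psi (evI (iA x) it) *: 1) | it <- L]) p.2.
  by rewrite big_map.
apply: hfree.
- by case: L hL hA.
- move=> p /in_map_ex [it ->] /=; split.
  + by case: it.
  + case: it => [d|w] /=.
    * apply: Dspan_salg; apply: Dspan_sub; first exact: svalP.
      by apply: Dspan_scale; exact: Dspan1.
    * apply: salg_gen; exists (star_word starA x w - psi (sw (iA x) w) *: 1).
      by rewrite iA_sub iA_scale hiA1 sw_iA.
  + by rewrite (ph_sub hpsi) (ph_scale hpsi) (ph1 hpsi) mulr1 subrr.
- case: L hL hA => [|it l] //= _ hA.
  exact: alt_path.
Qed.

Lemma bools_head k : bools k = nseq k true :: behead (bools k).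
Proof. elim: k => [|k IH] //=; by rewrite IH. Qed.

Lemma bools_size k s : s \in bools k -> size s = k.
Proof.
elim: k s => [|k IH] s /=; first by rewrite inE => /eqP ->.
rewrite mem_cat => /orP [] /mapP [s' h ->] /=; by rewrite IH.
Qed.

Lemma bools_count k s : s \in behead (bools k) -> (count id s < k)%N.
Proof.
elim: k s => [|k IH] s //=.
rewrite {1}bools_head /= mem_cat => /orP [] /mapP [s' h ->] /=.
- by rewrite add1n ltnS IH.
- by rewrite add0n ltnS -(bools_size h) count_size.
Qed.

Lemma prod_nseq_true (T: Type) (F : bool * T -> C) (L : seq T) :
  \prod_(q <- zip (nseq (size L) true) L | ~~ q.1) F q = 1.
Proof. elim: L => [|t L IH]; [by rewrite big_nil | by rewrite /= big_cons /= IH]. Qed.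

Section Good.
Variable I : Type.
Variable x : I -> A.
Variable Good : (I -> C) -> Prop.
Hypothesis Gc : forall a, Good (fun _ => a).
Hypothesis Gadd : forall f g, Good f -> Good g -> Good (fun i => f i + g i).
Hypothesis Gmul : forall f g, Good f -> Good g -> Good (fun i => f i * g i).
Hypothesis Gvar : forall w, Good (fun i => phi (star_word starA (x i) w)).

Lemma Gsum (T : Type) (r : seq T) (P : pred T) (F : T -> I -> C) :
  (forall t, P t -> Good (F t)) -> Good (fun i => \sum_(t <- r | P t) F t i).
Proof.
move=> h; elim: r => [|t r IH].
  have -> : (fun i => \sum_(t <- [::] | P t) F t i) = (fun _ => 0).
    by apply: functional_extensionality => i; rewrite big_nil.
  exact: Gc.
have -> : (fun i => \sum_(t0 <- t :: r | P t0) F t0 i) =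
          (fun i => (if P t then F t i else 0) + \sum_(t0 <- r | P t0) F t0 i).
  apply: functional_extensionality => i; rewrite big_cons.
  by case: (P t); rewrite ?add0r.
apply: Gadd => //; case hP: (P t) => //; exact: h.
Qed.

Lemma Gprod (T : Type) (r : seq T) (P : pred T) (F : T -> I -> C) :
  (forall t, Good (F t)) -> Good (fun i => \prod_(t <- r | P t) F t i).
Proof.
move=> h; elim: r => [|t r IH].
  have -> : (fun i => \prod_(t <- [::] | P t) F t i) = (fun _ => 1).
    by apply: functional_extensionality => i; rewrite big_nil.
  exact: Gc.
have -> : (fun i => \prod_(t0 <- t :: r | P t0) F t0 i) =
          (fun i => (if P t then F t i else 1) * \prod_(t0 <- r | P t0) F t0 i).
  apply: functional_extensionality => i; rewrite big_cons.
  by case: (P t); rewrite ?mul1r.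
apply: Gmul => //; case: (P t) => //.
Qed.

Lemma Gopp f : Good f -> Good (fun i => - f i).
Proof.
move=> h; have -> : (fun i => - f i) = (fun i => (-1) * f i).
  by apply: functional_extensionality => i; rewrite mulN1r.
by apply: Gmul.
Qed.

Lemma GcI it : Good (fun i => psi (evI (iA (x i)) it)).
Proof.
case: it => [d|w] /=; first exact: Gc.
have -> : (fun i => psi (sw (iA (x i)) w)) = (fun i => phi (star_word starA (x i) w)).
  by apply: functional_extensionality => i; rewrite sw_iA hiAphi.
exact: Gvar.
Qed.

Lemma goodF L : Good (fun i => psi (evF (iA (x i)) L)).
Proof.
suff: forall N L, (size L <= N)%N -> Good (fun i => psi (evF (iA (x i)) L)).
  by move=> h; apply: (h (size L)).
elim=> [|N IH] {}L hL.
  case: L hL => // _.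
  have -> : (fun i => psi (evF (iA (x i)) [::])) = (fun _ => psi 1).
    by apply: functional_extensionality => i; rewrite /evF big_nil.
  exact: Gc.
have -> : (fun i => psi (evF (iA (x i)) L)) = (fun i => psi (evF (iA (x i)) (normF L))).
  by apply: functional_extensionality => i; rewrite normF_ev.
have hL' : (size (normF L) <= N.+1)%N by apply: leq_trans (normF_size _) hL.
move: (normF_alt L) hL'; set L' := normF L => hA hL'.
have [hL0|hL0] : L' = [::] \/ L' <> [::] by case: (L') => [|? ?]; [left|right].
  rewrite hL0.
  have -> : (fun i => psi (evF (iA (x i)) [::])) = (fun _ => psi 1).
    by apply: functional_extensionality => i; rewrite /evF big_nil.
  exact: Gc.
have key : forall i, psi (evF (iA (x i)) L') =
   - \sum_(s <- behead (bools (size L')))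
       (\prod_(q <- zip s L' | ~~ q.1) (- psi (evI (iA (x i)) q.2))) *
       psi (evF (iA (x i)) (mask s L')).
  move=> i; have := freeF (x i) hL0 hA.
  rewrite expand (ph_sum hpsi) bools_head big_cons (ph_scale hpsi).
  have -> : \prod_(q <- zip (nseq (size L') true) L' | ~~ q.1) - psi (evI (iA (x i)) q.2) = 1.
    by apply: prod_nseq_true.
  rewrite mul1r.
  have -> : mask (nseq (size L') true) L' = L' by rewrite mask_true.
  rewrite /= /evF; move/eqP; rewrite addr_eq0 => /eqP ->.
  congr (- _); by apply: eq_bigr => s _; rewrite (ph_scale hpsi).
have -> : (fun i => psi (evF (iA (x i)) L')) = (fun i => - \sum_(s <- behead (bools (size L')))
       (\prod_(q <- zip s L' | ~~ q.1) (- psi (evI (iA (x i)) q.2))) *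
       psi (evF (iA (x i)) (mask s L'))).
  by apply: functional_extensionality => i; rewrite key.
apply: Gopp.
have -> : (fun i => \sum_(s <- behead (bools (size L')))
       (\prod_(q <- zip s L' | ~~ q.1) (- psi (evI (iA (x i)) q.2))) *
       psi (evF (iA (x i)) (mask s L'))) =
   (fun i => \sum_(s <- behead (bools (size L')) | s \in behead (bools (size L')))
       (\prod_(q <- zip s L' | ~~ q.1) (- psi (evI (iA (x i)) q.2))) *
       psi (evF (iA (x i)) (mask s L'))).
  by apply: functional_extensionality => i; rewrite big_seq.
apply: Gsum => s hs; apply: Gmul.
  by apply: Gprod => q; apply: Gopp; apply: GcI.
apply: IH.
have hs' : s \in bools (size L') by rewrite (bools_head (size L')) inE hs orbT.
rewrite size_mask ?(bools_size hs') //.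
by rewrite -ltnS; apply: leq_trans (bools_count hs) hL'.
Qed.
End Good.

Definition DE i j : Ds := exist _ (E i j) (Dspan_E i j).
Definition dstar (d : Ds) : Ds := exist _ (starB (sval d)) (Dspan_star (svalP d)).
Definition starI (it : item) : item :=
  match it with inl d => inl (dstar d) | inr w => inr (rev (map negb w)) end.
Definition starL (L : seq item) := rev (map starI L).

Fixpoint trans (b : ncterm C n) : seq (C * seq item) :=
  match b with
  | NGen i k => [:: (1, [:: inl (DE e1 i); inr [:: false]; inl (DE k e1)])]
  | NOne => [:: (1, [:: inl (DE e1 e1)])]
  | NAdd x y => trans x ++ trans y
  | NScale a x => [seq (a * p.1, p.2) | p <- trans x]
  | NMul x y => [seq (p.1 * q.1, p.2 ++ q.2) | p <- trans x, q <- trans y]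
  | NStar x => [seq (Num.conj p.1, starL p.2) | p <- trans x]
  end.

Lemma st_sw X w : starB (sw X w) = sw X (rev (map negb w)).
Proof.
rewrite /sw /star_word.
rewrite -(big_map (fun b => if b then starB X else X) xpredT id) (st_prod hstarB).
rewrite -!map_rev !big_map; apply: eq_bigr => b _.
by case: b => //=; rewrite (st_invol hstarB).
Qed.

Lemma st_evF X L : starB (evF X L) = evF X (starL L).
Proof.
rewrite /evF -(big_map (evI X) xpredT id) (st_prod hstarB).
rewrite /starL -!map_rev !big_map; apply: eq_bigr => it _.
by case: it => [d|w] //=; rewrite st_sw.
Qed.

Lemma evF_cat X l l' : evF X (l ++ l') = evF X l * evF X l'.
Proof. by rewrite /evF big_cat. Qed.

Lemma trans_ok X b :
  nceval (E e1 e1) starB (W X) b = \sum_(p <- trans b) p.1 *: evF X p.2.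
Proof.
elim: b => [i k| |x IHx y IHy|a x IHx|x IHx y IHy|x IHx] /=.
- by rewrite big_seq1 scale1r /evF !big_cons big_nil /= /sw /star_word big_seq1 /W !mulr1 mulrA.
- by rewrite big_seq1 scale1r /evF big_seq1.
- by rewrite IHx IHy big_cat.
- rewrite IHx big_map scaler_sumr; apply: eq_bigr => p _; by rewrite scalerA.
- rewrite IHx IHy big_allpairs_dep mulr_suml; apply: eq_bigr => p _.
  rewrite mulr_sumr; apply: eq_bigr => q _.
  by rewrite -scalerAl mulZB scalerA evF_cat.
- rewrite IHx big_map (st_sum hstarB); apply: eq_bigr => p _.
  by rewrite (st_scale hstarB) st_evF.
Qed.

Lemma psi_trans X b :
  psi (nceval (E e1 e1) starB (W X) b) = \sum_(p <- trans b) p.1 * psi (evF X p.2).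
Proof.
rewrite trans_ok (ph_sum hpsi); apply: eq_bigr => p _; by rewrite (ph_scale hpsi).
Qed.

Lemma same_moments (a1 a2 : A) :
  (forall w, phi (star_word starA a1 w) = phi (star_word starA a2 w)) ->
  forall b, psi (nceval (E e1 e1) starB (W (iA a1)) b) = psi (nceval (E e1 e1) starB (W (iA a2)) b).
Proof.
move=> h b; rewrite !psi_trans; apply: eq_bigr => p _; congr (_ * _).
have := @goodF bool (fun c => if c then a1 else a2) (fun f => f true = f false).
apply => //.
- by move=> f g /= -> ->.
- by move=> f g /= -> ->.
Qed.

Lemma goodpsi (I : Type) (x : I -> A) (Good : (I -> C) -> Prop)
  (Gc : forall a, Good (fun _ => a))
  (Gadd : forall f g, Good f -> Good g -> Good (fun i => f i + g i))
  (Gmul : forall f g, Good f -> Good g -> Good (fun i => f i * g i))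
  (Gvar : forall w, Good (fun i => phi (star_word starA (x i) w))) b :
  Good (fun i => psi (nceval (E e1 e1) starB (W (iA (x i))) b)).
Proof.
have -> : (fun i => psi (nceval (E e1 e1) starB (W (iA (x i))) b)) =
   (fun i => \sum_(p <- trans b | true) p.1 * psi (evF (iA (x i)) p.2)).
  by apply: functional_extensionality => i; rewrite psi_trans.
apply (Gsum Gc Gadd) => p _; apply Gmul; [exact: Gc | exact: (goodF Gc Gadd Gmul Gvar)].
Qed.

Lemma nceval_W1 b : nceval (E e1 e1) starB (W 1) b = nccounit b *: E e1 e1.
Proof.
elim: b => [i k| |x IHx y IHy|a x IHx|x IHx y IHy|x IHx] /=.
- exact: W1.
- by rewrite scale1r.
- by rewrite IHx IHy scalerDl.
- by rewrite IHx scalerA.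
- by rewrite IHx IHy -scalerAl mulZB EEs scalerA.
- by rewrite IHx (st_scale hstarB) hES.
Qed.

Lemma star_word1 (w : seq bool) : star_word starA 1 w = 1.
Proof. by rewrite /star_word big1 // => b _; case: b; rewrite ?(st1 hstarA). Qed.

Lemma n_neq0 : (n%:R : C) != 0.
Proof. by rewrite pnatr_eq0 -lt0n. Qed.

Lemma cond5 b eps : 0 < eps -> exists d : R, Rlt R0 d /\ forall s, Rlt R0 s -> Rlt s d ->
  `|n%:R * psi (nceval (E e1 e1) starB (W (iA (U s))) b) - nccounit b| < eps.
Proof.
case: hU => _ hU0 _ _ hcont.
have key : tends (fun s => n%:R * psi (nceval (E e1 e1) starB (W (iA (U s))) b))
  (n%:R * psi (nceval (E e1 e1) starB (W (iA (U R0))) b)).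
  apply: tends_mul; first exact: tends_const.
  apply: (@goodpsi R U (fun f => tends f (f R0))).
  - move=> a; exact: tends_const.
  - by move=> f g hf hg; apply: tends_add.
  - by move=> f g hf hg; apply: tends_mul.
  - move=> w; rewrite hU0 star_word1 (ph1 hphi); exact: hcont.
rewrite hU0 hiA1 nceval_W1 (ph_scale hpsi) hEtr eqxx mul1r in key.
rewrite mulrCA divff ?mulr1 in key; last exact: n_neq0.
exact: key.
Qed.

Section Cond4.
Variable incs : seq A.
Hypothesis hinc : free_family phi [seq salg 1 starA (fun y => y = x) | x <- incs].

Definition xm m := nth 0 incs m.
Definition Xin m (y : B) := (m < size incs)%N /\
  exists a, y = iA a /\ salg 1 starA (fun z => z = xm m) a.
Definition itok (p : nat * B) := if p.1 is m.+1 then Xin m p.2 else Dspan p.2.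
Definition evL (L : seq (nat * B)) := \prod_(p <- L) p.2.
Fixpoint adjn (s : seq nat) : bool :=
  match s with a :: ((b :: _) as t) => (a != b) && adjn t | _ => true end.
Definition okc (L : seq (nat * B)) := forall p, p \in L -> itok p /\ psi p.2 = 0.

Lemma adjn_path (T : Type) (x : nat * T) l :
  adjn (x.1 :: map fst l) = path (fun p q : nat * T => p.1 != q.1) x l.
Proof. by elim: l x => [|y l IH] x //=; rewrite -IH. Qed.

Lemma adjn_cons a s : adjn (a :: s) -> adjn s.
Proof. by case: s => [|b s] //= /andP []. Qed.

Lemma adjn_cat s1 s2 : adjn s1 -> adjn s2 ->
  (s1 = [::] \/ s2 = [::] \/ last 0%N s1 != head 0%N s2) -> adjn (s1 ++ s2).
Proof.
elim: s1 => [|a s1 IH] //= h1 h2 h3.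
case: s1 IH h1 h3 => [|b s1] IH h1 h3 /=.
  clear IH; case: s2 h2 h3 => [|c s2] //= h2 [] // [] // ->; by rewrite h2.
case/andP: h1 => hab h1.
have h : adjn ((b :: s1) ++ s2).
  by apply: IH => //; case: h3 => [//|[-> |h]]; [right; left|right; right].
by move: h => /= ->; rewrite hab.
Qed.

Definition runok m (a : A) := exists run : seq (nat * A),
  [/\ run != [::], (head (0%N, 0) run).1 = m,
      (forall p, p \in run -> [/\ (p.1 < size incs)%N,
                                 salg 1 starA (fun z => z = xm p.1) p.2 & phi p.2 = 0]),
      adjn (map fst run) & a = \prod_(p <- run) p.2].

Lemma runok_phi m a : runok m a -> phi a = 0.
Proof.
case=> run [hne _ hin hadj ->].
apply: hinc => //.
- move=> p /hin [h1 h2 h3]; split => //; first by rewrite size_map.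
  by rewrite (nth_map 0).
- by case: run hne hin hadj => [|r rs] //= _ _; rewrite -adjn_path.
Qed.

Lemma runok_single m a : (m < size incs)%N -> salg 1 starA (fun z => z = xm m) a ->
  phi a = 0 -> runok m a.
Proof.
move=> h1 h2 h3; exists [:: (m, a)]; split => //.
- by move=> p; rewrite inE => /eqP ->.
- by rewrite big_seq1.
Qed.

Lemma runok_cons m m' a0 a : runok m' a -> m != m' -> (m < size incs)%N ->
  salg 1 starA (fun z => z = xm m) a0 -> phi a0 = 0 -> runok m (a0 * a).
Proof.
case=> run [hne hhd hin hadj ->] hmm h1 h2 h3.
exists ((m, a0) :: run); split => //.
- by move=> p; rewrite inE => /orP [/eqP -> //|/hin].
- by case: run hne hhd hin hadj => [|r rs] //= _ hhd _ h; rewrite h andbT hhd.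
- by rewrite big_cons.
Qed.

Fixpoint group (L : seq (nat * B)) : seq (nat * B) :=
  match L with
  | [::] => [::]
  | p :: l =>
     if p.1 is _.+1 then
       match group l with
       | (0%N, z) :: g => (0%N, p.2 * z) :: g
       | g => (0%N, p.2) :: g
       end
     else (1%N, p.2) :: group l
  end.

Lemma evL_cons p l : evL (p :: l) = p.2 * evL l.
Proof. by rewrite /evL big_cons. Qed.

Lemma group_ev L : evL (group L) = evL L.
Proof.
elim: L => [|[k y] l IH] //=; rewrite evL_cons -IH; case: k => [|k] /=.
  by rewrite evL_cons.
case: (group l) => [|[[|j] z] g] /=; rewrite !evL_cons ?mulrA //.
Qed.

Lemma group_nil L : group L = [::] -> L = [::].
Proof.
case: L => [|[k y] l] //=; case: k => [|k] //=.
by case: (group l) => [|[[|j] z] g].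
Qed.

Definition gok (q : nat * B) := (q.1 = 0%N /\ exists m a, q.2 = iA a /\ runok m a)
  \/ (q.1 = 1%N /\ Dspan q.2 /\ psi q.2 = 0).

Lemma okc_cons p l : okc (p :: l) -> okc l.
Proof. by move=> h q hq; apply: h; rewrite inE hq orbT. Qed.

Lemma okc_head p l : okc (p :: l) -> itok p /\ psi p.2 = 0.
Proof. by move=> h; apply: h; rewrite inE eqxx. Qed.

Lemma group_spec L : okc L -> adjn (map fst L) ->
  [/\ forall q, q \in group L -> gok q,
      adjn (map fst (group L)) &
      forall m y l, L = (m.+1, y) :: l -> exists a g, group L = (0%N, iA a) :: g /\ runok m a].
Proof.
elim: L => [|[k y] l IH] //= hok hadjL.
have [hmem hadj hhead] := IH (okc_cons hok) (adjn_cons hadjL).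
have [hit hpy] := okc_head hok.
case: k hit hpy hadjL hok => [|m] /= hit hpy hadjL hok.
  split => //.
  - move=> q; rewrite inE => /orP [/eqP -> |/hmem //]; by right.
  - case: l {IH hok} hmem hadj hhead hadjL => [|[[|j] y'] l'] // hmem hadj hhead hadjL.
    have [a [g [hg _]]] := hhead j y' l' erefl.
    by move: hadj; rewrite hg /=.
case: hit => hm [a0 [hy ha0]]; simpl in hy, hpy.
have hpa0 : phi a0 = 0 by rewrite -hiAphi -hy.
case: l {IH hok} hmem hadj hhead hadjL => [|[[|j] y'] l'] hmem hadj hhead hadjL.
- rewrite /=; split => //.
  + move=> q; rewrite inE => /eqP ->; left; split => //; exists m, a0; split => //.
    exact: runok_single.
  + move=> m' y0 l0 [<- _ _]; exists a0, [::]; split; first by rewrite -hy.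
    exact: runok_single.
- rewrite /=; split.
  + move=> q; rewrite inE => /orP [/eqP -> |/hmem //]; left; split => //.
    exists m, a0; split => //; exact: runok_single.
  + by move: hadj => /=.
  + move=> m' y0 l0 [<- _ _]; exists a0, ((1%N, y') :: group l'); split; first by rewrite -hy.
    exact: runok_single.
- have [a [g [hg hra]]] := hhead j y' l' erefl.
  rewrite hg.
  have hmj : m != j by case/andP: hadjL => /= h _; move: h; rewrite eqSS.
  have hr : runok m (a0 * a) by apply: runok_cons hra hmj hm ha0 hpa0.
  split.
  + move=> q; rewrite inE => /orP [/eqP -> |hq].
      left; split => //; exists m, (a0 * a); split => //; by rewrite hy hiAM.
    by apply: hmem; rewrite hg inE hq orbT.
  + by move: hadj; rewrite hg.
  + move=> m' y0 l0 [<- _ _]; exists (a0 * a), g; split => //; by rewrite hy hiAM.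
Qed.

Lemma MF L : L <> [::] -> okc L -> adjn (map fst L) -> psi (evL L) = 0.
Proof.
move=> hne hok hadj; rewrite -group_ev.
have [hmem hadjg _] := group_spec hok hadj.
apply: hfree.
- by case hg: (group L) => //; move: (group_nil hg).
- move=> p /hmem [[h1 [m [a [h2 h3]]]]|[h1 [h2 h3]]]; rewrite h1; split => //.
  + by rewrite h2; apply: salg_gen; exists a.
  + by rewrite h2 hiAphi; exact: runok_phi h3.
  + exact: Dspan_salg.
- by case: (group L) hadjg => [|q g] //= h; rewrite -adjn_path.
Qed.

Definition itm m (p : nat * B) := itok p /\ (p.1 = 0%N \/ p.1 = m.+1).
Definition wfm m (L : seq (nat * B)) := forall p, p \in L -> itm m p.
Definition hasX (L : seq (nat * B)) := has (fun k : nat => k != 0%N) (map fst L).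
Definition Red0 m (L : seq (nat * B)) :=
  [/\ L <> [::], wfm m L, (forall p, p \in L -> psi p.2 = 0), adjn (map fst L) & hasX L].
Definition SpanRed m (x : B) := exists r : seq (C * seq (nat * B)),
  (forall q, q \in r -> Red0 m q.2) /\ x = \sum_(q <- r) q.1 *: evL q.2.
Definition DS m (x : B) := exists d y, [/\ Dspan d, SpanRed m y & x = d + y].

Lemma SpanRed0 m : SpanRed m 0.
Proof. by exists [::]; rewrite big_nil. Qed.

Lemma SpanRed_add m x y : SpanRed m x -> SpanRed m y -> SpanRed m (x + y).
Proof.
case=> r [hr ->] [r' [hr' ->]]; exists (r ++ r'); split; last by rewrite big_cat.
by move=> q; rewrite mem_cat => /orP [/hr|/hr'].
Qed.

Lemma SpanRed_scale m a x : SpanRed m x -> SpanRed m (a *: x).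
Proof.
case=> r [hr ->]; exists [seq (a * q.1, q.2) | q <- r]; split.
  by move=> q /mapP [q' /hr h ->].
by rewrite big_map scaler_sumr; apply: eq_bigr => q _; rewrite scalerA.
Qed.

Lemma SpanRed_red m R : Red0 m R -> SpanRed m (evL R).
Proof.
move=> h; exists [:: (1, R)]; split; last by rewrite big_seq1 scale1r.
by move=> q; rewrite inE => /eqP ->.
Qed.

Lemma DS_add m x y : DS m x -> DS m y -> DS m (x + y).
Proof.
case=> d [z [hd hz ->]] [d' [z' [hd' hz' ->]]].
exists (d + d'), (z + z'); split; [exact: Dspan_add|exact: SpanRed_add|].
by rewrite addrACA.
Qed.

Lemma DS_scale m a x : DS m x -> DS m (a *: x).
Proof.
case=> d [z [hd hz ->]]; exists (a *: d), (a *: z); split.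
- exact: Dspan_scale.
- exact: SpanRed_scale.
- by rewrite scalerDr.
Qed.

Lemma DS_D m d : Dspan d -> DS m d.
Proof. by move=> h; exists d, 0; split; [|exact: SpanRed0|rewrite addr0]. Qed.

Lemma DS_S m y : SpanRed m y -> DS m y.
Proof. by move=> h; exists 0, y; split; [exact: Dspan0| |rewrite add0r]. Qed.

Lemma Red0_psi m R : Red0 m R -> psi (evL R) = 0.
Proof.
case=> hne hwf hc hadj _; apply: MF => // p hp; split; last exact: hc.
by case: (hwf p hp).
Qed.

Lemma SpanRed_psi m x : SpanRed m x -> psi x = 0.
Proof.
case=> r [hr ->]; rewrite (ph_sum hpsi) big1_seq // => q /andP [_ hq].
by rewrite (ph_scale hpsi) (Red0_psi (hr _ hq)) mulr0.
Qed.

Lemma Xin_mul m y y' : Xin m y -> Xin m y' -> Xin m (y * y').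
Proof.
case=> hm [a [-> ha]] [_ [a' [-> ha']]]; split => //.
by exists (a * a'); rewrite hiAM; split => //; apply: salg_mul.
Qed.

Lemma Xin_cen m y c : Xin m y -> Xin m (y - c *: 1).
Proof.
case=> hm [a [-> ha]]; split => //; exists (a - c *: 1); split.
  by rewrite iA_sub iA_scale hiA1.
apply: salg_add => //; rewrite -scaleNr; apply: salg_scale; exact: salg_one.
Qed.

Lemma itok_cen p c : itok p -> itok (p.1, p.2 - c *: 1).
Proof.
case: p => [[|k] y] /= h.
  by apply: Dspan_sub => //; apply: Dspan_scale; exact: Dspan1.
exact: Xin_cen.
Qed.

Definition merge2 (p : nat * B) (l : seq (nat * B)) :=
  match l with
  | q :: l' => if p.1 == q.1 then (p.1, p.2 * q.2) :: l' else p :: l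
  | [::] => [:: p]
  end.
Fixpoint normE (L : seq (nat * B)) :=
  match L with [::] => [::] | p :: l => merge2 p (normE l) end.

Lemma evL_cat l l' : evL (l ++ l') = evL l * evL l'.
Proof. by rewrite /evL big_cat. Qed.

Lemma normE_ev L : evL (normE L) = evL L.
Proof.
elim: L => [|p l IH] //=; rewrite evL_cons -IH.
case: (normE l) => [|q l'] /=; first by rewrite !evL_cons.
by case: ifP => _; rewrite !evL_cons // mulrA.
Qed.

Lemma normE_size L : (size (normE L) <= size L)%N.
Proof.
elim: L => [|p l IH] //=.
case: (normE l) IH => [|q l'] //= IH.
by case: ifP => _ /=; rewrite ltnS // ltnW.
Qed.

Lemma normE_adj L : adjn (map fst (normE L)).
Proof.
elim: L => [|p l IH] //=.
case: (normE l) IH => [|q l'] //= IH.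
case: ifP => /= h; last by rewrite h.
by move/eqP: h => ->.
Qed.

Lemma itm_mul m p q : itm m p -> itm m q -> p.1 = q.1 -> itm m (p.1, p.2 * q.2).
Proof.
case: p => [k y]; case: q => [k' y'] /= [h1 h2] [h1' _] /= e; subst k'.
split => //; case: k h1 h2 h1' => [|k] /= h1 h2 h1'.
  exact: Dspan_mul.
exact: Xin_mul.
Qed.

Lemma normE_wf m L : wfm m L -> wfm m (normE L).
Proof.
elim: L => [|p l IH] //= hw.
have hl : wfm m l by move=> q hq; apply: hw; rewrite inE hq orbT.
have hp : itm m p by apply: hw; rewrite inE eqxx.
have := IH hl; case: (normE l) => [|q l'] /= hw'.
  by move=> r; rewrite inE => /eqP ->.
case: ifP => /eqP h.
  move=> r; rewrite inE => /orP [/eqP ->|hr]; last by apply: hw'; rewrite inE hr orbT.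
  by apply: itm_mul => //; apply: hw'; rewrite inE eqxx.
move=> r; rewrite inE => /orP [/eqP -> //|hr]; exact: hw'.
Qed.

Lemma evL_split l1 p l2 c :
  evL (l1 ++ p :: l2) = evL (l1 ++ (p.1, p.2 - c *: 1) :: l2) + c *: evL (l1 ++ l2).
Proof.
rewrite !evL_cat !evL_cons /= mulrBl -scalerAl mul1r mulrBr mulZB subrK.
by [].
Qed.

Lemma wfm_cat m l1 l2 : wfm m (l1 ++ l2) -> wfm m l1 /\ wfm m l2.
Proof. by move=> h; split => p hp; apply: h; rewrite mem_cat hp ?orbT. Qed.

Lemma allD_ev L : (forall p, p \in L -> itok p) -> ~~ hasX L -> Dspan (evL L).
Proof.
elim: L => [|p l IH] h hX; first by rewrite /evL big_nil; exact: Dspan1.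
rewrite evL_cons; apply: Dspan_mul.
  have hp := h p (mem_head _ _); move: hp hX; clear h IH; rewrite /hasX /=; by case: p => [[|k] y].
apply: IH; first by move=> q hq; apply: h; rewrite inE hq orbT.
by move: hX; rewrite /hasX /= negb_or => /andP [].
Qed.

Lemma reduce m L : wfm m L -> DS m (evL L).
Proof.
suff: forall N L, (size L <= N)%N -> wfm m L -> DS m (evL L).
  by move=> h; apply: (h (size L)).
elim=> [|N IHN] {}L hs hw.
  by case: L hs hw => // _ _; apply: DS_D; rewrite /evL big_nil; exact: Dspan1.
rewrite -normE_ev.
have hw' := normE_wf hw.
have hs' : (size (normE L) <= N.+1)%N by apply: leq_trans (normE_size _) hs.
have ha := normE_adj L.
move: (normE L) hw' hs' ha => K hwK hsK haK.
case hX : (hasX K); last first.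
  apply: DS_D; apply: allD_ev; last by rewrite hX.
  by move=> p /hwK [].
suff: forall l1 l2, wfm m (l1 ++ l2) -> adjn (map fst (l1 ++ l2)) -> hasX (l1 ++ l2) ->
    (size (l1 ++ l2) <= N.+1)%N -> (forall p, p \in l2 -> psi p.2 = 0) -> DS m (evL (l1 ++ l2)).
  by move=> h; rewrite -[K]cats0; apply: h; rewrite ?cats0.
elim/last_ind => [|l1 p IH] l2 hw2 ha2 hX2 hs2 hc.
  apply: DS_S; apply: SpanRed_red; split => //.
  by move=> hK0; rewrite hK0 in hX2.
rewrite cat_rcons in hw2 ha2 hX2 hs2 *.
case hp : (psi p.2 == 0).
  apply: IH => //; move=> q; rewrite inE => /orP [/eqP -> |/hc] //; exact/eqP.
rewrite (evL_split _ _ _ (psi p.2)).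
have hfst : map fst (l1 ++ (p.1, p.2 - psi p.2 *: 1) :: l2) = map fst (l1 ++ p :: l2).
  by rewrite !map_cat.
apply: DS_add.
  apply: IH.
  - move=> q; rewrite mem_cat inE => /orP [hq|/orP [/eqP ->|hq]].
    + by apply: hw2; rewrite mem_cat hq.
    + have [h1 h2] : itm m p by apply: hw2; rewrite mem_cat inE eqxx orbT.
      by split => //; apply: itok_cen.
    + by apply: hw2; rewrite mem_cat inE hq !orbT.
  - by rewrite hfst.
  - by rewrite /hasX hfst.
  - by rewrite size_cat /= -(size_cat l1 (p :: l2)).
  - move=> q; rewrite inE => /orP [/eqP -> /=|/hc //].
    by rewrite (ph_sub hpsi) (ph_scale hpsi) (ph1 hpsi) mulr1 subrr.
apply: DS_scale; apply: IHN.
  by move: hs2; rewrite !size_cat /= addnS ltnS.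
by move=> q; rewrite mem_cat => /orP [hq|hq]; apply: hw2; rewrite mem_cat ?hq ?inE ?hq ?orbT.
Qed.

Lemma Red0_cen_sub m d : Dspan d -> itm m (0%N, d - psi d *: 1) /\ psi (d - psi d *: 1) = 0.
Proof.
move=> hd; split.
  split; last by left.
  by apply: Dspan_sub => //; apply: Dspan_scale; exact: Dspan1.
by rewrite (ph_sub hpsi) (ph_scale hpsi) (ph1 hpsi) mulr1 subrr.
Qed.

Lemma Red0_cons m p R : Red0 m (p :: R) -> p.1 = 0%N -> Red0 m R.
Proof.
case=> _ hw hc ha hX hp; split.
- by move=> hR; move: hX; rewrite hR /hasX /= hp.
- by move=> q hq; apply: hw; rewrite inE hq orbT.
- by move=> q hq; apply: hc; rewrite inE hq orbT.
- exact: adjn_cons ha.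
- by move: hX; rewrite /hasX /= hp.
Qed.

Lemma Red0_newhead m q p R : Red0 m (p :: R) -> itm m q -> psi q.2 = 0 -> q.1 = p.1 ->
  Red0 m (q :: R).
Proof.
case=> _ hw hc ha hX hq1 hq2 e; split => //.
- by move=> r; rewrite inE => /orP [/eqP -> //|hr]; apply: hw; rewrite inE hr orbT.
- by move=> r; rewrite inE => /orP [/eqP -> //|hr]; apply: hc; rewrite inE hr orbT.
- by rewrite /= e.
- by rewrite /hasX /= e.
Qed.

Lemma Red0_addD m d R : Red0 m R -> (head 0%N (map fst R) != 0%N) -> Dspan d ->
  Red0 m ((0%N, d - psi d *: 1) :: R).
Proof.
case=> hne hw hc ha hX hh hd; have [hi hz] := Red0_cen_sub m hd; split => //.
- by move=> r; rewrite inE => /orP [/eqP -> //|hr]; apply: hw.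
- by move=> r; rewrite inE => /orP [/eqP -> //|hr]; apply: hc.
- by case: R hne hw hc ha hX hh => [|r R] //= *; apply/andP; split => //; rewrite eq_sym.
Qed.

Lemma capL m d R : Dspan d -> Red0 m R -> SpanRed m (d * evL R).
Proof.
move=> hd hR; case: R hR => [[]//|p R] hR.
rewrite evL_cons.
case hp : (p.1 == 0%N).
  move/eqP: hp => hp.
  have he : Dspan (d * p.2).
    apply: Dspan_mul => //; case: hR => _ hw _ _ _.
    by have [h _] := hw p (mem_head _ _); move: h; rewrite /itok hp.
  have -> : d * (p.2 * evL R) = evL ((0%N, d * p.2 - psi (d * p.2) *: 1) :: R) + psi (d * p.2) *: evL R.
    by rewrite evL_cons /= mulrBl -scalerAl mul1r subrK mulrA.
  apply: SpanRed_add; last by apply: SpanRed_scale; apply: SpanRed_red; exact: Red0_cons hR hp.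
  apply: SpanRed_red; apply: Red0_newhead hR _ _ _ => //.
    by case: (Red0_cen_sub m he).
  by case: (Red0_cen_sub m he).
have -> : d * (p.2 * evL R) = evL ((0%N, d - psi d *: 1) :: p :: R) + psi d *: evL (p :: R).
  by rewrite !evL_cons /= mulrBl -scalerAl mul1r subrK mulrA.
apply: SpanRed_add; last by apply: SpanRed_scale; apply: SpanRed_red.
apply: SpanRed_red; apply: Red0_addD => //=; by rewrite hp.
Qed.

Lemma adjn_rcons_l s a : adjn (rcons s a) -> adjn s.
Proof.
elim: s => [|b s IH] //=; case: s IH => [|c s] IH //=.
by case/andP => -> /IH.
Qed.

Lemma adjn_rcons s a : adjn s -> (s = [::] \/ last 0%N s != a) -> adjn (rcons s a).
Proof.
move=> hs h; rewrite -cats1; apply: adjn_cat => //.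
by case: h => [->|h]; [left|right; right].
Qed.

Lemma evL_rcons R p : evL (rcons R p) = evL R * p.2.
Proof. by rewrite -cats1 evL_cat evL_cons /evL big_nil mulr1. Qed.

Lemma Red0_rcons m p R : Red0 m (rcons R p) -> p.1 = 0%N -> Red0 m R.
Proof.
case=> _ hw hc ha hX hp; split.
- by move=> hR; move: hX; rewrite hR /hasX /= hp.
- by move=> q hq; apply: hw; rewrite mem_rcons inE hq orbT.
- by move=> q hq; apply: hc; rewrite mem_rcons inE hq orbT.
- by move: ha; rewrite map_rcons => /adjn_rcons_l.
- by move: hX; rewrite /hasX map_rcons -cats1 has_cat /= hp /= !orbF.
Qed.

Lemma Red0_newlast m q p R : Red0 m (rcons R p) -> itm m q -> psi q.2 = 0 -> q.1 = p.1 ->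
  Red0 m (rcons R q).
Proof.
case=> _ hw hc ha hX hq1 hq2 e; split => //.
- by case: R {hw hc ha hX}.
- by move=> r; rewrite mem_rcons inE => /orP [/eqP -> //|hr]; apply: hw; rewrite mem_rcons inE hr orbT.
- by move=> r; rewrite mem_rcons inE => /orP [/eqP -> //|hr]; apply: hc; rewrite mem_rcons inE hr orbT.
- by rewrite map_rcons e -map_rcons.
- by rewrite /hasX map_rcons e -map_rcons.
Qed.

Lemma Red0_addDr m d R : Red0 m R -> (last 0%N (map fst R) != 0%N) -> Dspan d ->
  Red0 m (rcons R (0%N, d - psi d *: 1)).
Proof.
case=> hne hw hc ha hX hh hd; have [hi hz] := Red0_cen_sub m hd; split => //.
- by case: R {hne hw hc ha hX hh}.
- by move=> r; rewrite mem_rcons inE => /orP [/eqP -> //|hr]; apply: hw.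
- by move=> r; rewrite mem_rcons inE => /orP [/eqP -> //|hr]; apply: hc.
- rewrite map_rcons; apply: adjn_rcons => //; by right.
- by move: hX; rewrite /hasX map_rcons -cats1 has_cat => ->.
Qed.

Lemma capR m d R : Dspan d -> Red0 m R -> SpanRed m (evL R * d).
Proof.
move=> hd hR; case/lastP: R hR => [[]//|R p] hR.
rewrite evL_rcons.
case hp : (p.1 == 0%N).
  move/eqP: hp => hp.
  have he : Dspan (p.2 * d).
    apply: Dspan_mul => //; case: hR => _ hw _ _ _.
    have hpin : p \in rcons R p by rewrite mem_rcons mem_head.
    by have [h _] := hw p hpin; move: h; rewrite /itok hp.
  have -> : evL R * p.2 * d = evL (rcons R (0%N, p.2 * d - psi (p.2 * d) *: 1)) + psi (p.2 * d) *: evL R.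
    by rewrite evL_rcons /= mulrBr mulZB mulr1 subrK mulrA.
  apply: SpanRed_add; last by apply: SpanRed_scale; apply: SpanRed_red; exact: Red0_rcons hR hp.
  apply: SpanRed_red; apply: Red0_newlast hR _ _ _ => //.
    by case: (Red0_cen_sub m he).
  by case: (Red0_cen_sub m he).
have -> : evL R * p.2 * d = evL (rcons (rcons R p) (0%N, d - psi d *: 1)) + psi d *: evL (rcons R p).
  by rewrite !evL_rcons /= mulrBr mulZB mulr1 subrK.
apply: SpanRed_add; last by apply: SpanRed_scale; apply: SpanRed_red.
apply: SpanRed_red; apply: Red0_addDr => //; by rewrite map_rcons last_rcons hp.
Qed.

Lemma SpanRed_sum m (I : Type) (r : seq I) (P : pred I) (F : I -> B) :
  (forall i, P i -> SpanRed m (F i)) -> SpanRed m (\sum_(i <- r | P i) F i).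
Proof.
move=> h; apply: (big_ind (SpanRed m)) => //; [exact: SpanRed0 | exact: SpanRed_add].
Qed.

Lemma SpanRed_capL m d x : Dspan d -> SpanRed m x -> SpanRed m (d * x).
Proof.
move=> hd [r [hr ->]]; rewrite mulr_sumr big_seq; apply: SpanRed_sum => q hq.
by rewrite mulZB; apply: SpanRed_scale; apply: capL => //; apply: hr.
Qed.

Lemma SpanRed_capR m d x : Dspan d -> SpanRed m x -> SpanRed m (x * d).
Proof.
move=> hd [r [hr ->]]; rewrite mulr_suml big_seq; apply: SpanRed_sum => q hq.
by rewrite -scalerAl; apply: SpanRed_scale; apply: capR => //; apply: hr.
Qed.

Lemma DS_sum m (I : Type) (r : seq I) (F : I -> B) :
  (forall i, DS m (F i)) -> DS m (\sum_(i <- r) F i).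
Proof.
move=> h; apply: (big_ind (DS m)) => //; [by apply: DS_D; exact: Dspan0 | exact: DS_add].
Qed.

Lemma salg_star_word (x : A) w : salg 1 starA (fun z => z = x) (star_word starA x w).
Proof.
elim: w => [|b w IH]; first by rewrite /star_word big_nil; exact: salg_one.
rewrite /star_word big_cons; apply: salg_mul => //.
case: b; [apply: salg_star|]; exact: salg_gen.
Qed.

Definition toE m (it : item) : nat * B :=
  match it with inl d => (0%N, sval d) | inr w => (m.+1, sw (iA (xm m)) w) end.

Lemma evF_evL m L : evF (iA (xm m)) L = evL (map (toE m) L).
Proof. by rewrite /evF /evL big_map; apply: eq_bigr => it _; case: it. Qed.

Lemma toE_wf m L : (m < size incs)%N -> wfm m (map (toE m) L).
Proof.
move=> hm p /in_map_ex [it ->]; case: it => [d|w] /=.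
  by split; [exact: svalP | left].
split; last by right.
split => //; exists (star_word starA (xm m) w); split; first by rewrite sw_iA.
exact: salg_star_word.
Qed.

Lemma nceval_corner X b :
  E e1 e1 * nceval (E e1 e1) starB (W X) b * E e1 e1 = nceval (E e1 e1) starB (W X) b.
Proof.
elim: b => [i k| |x IHx y IHy|a x IHx|x IHx y IHy|x IHx] /=.
- exact: W_corner.
- by rewrite !EEs.
- by rewrite mulrDr mulrDl IHx IHy.
- by rewrite mulZB -scalerAl IHx.
- by rewrite -IHx -IHy !mulrA !EEs' EEs.
- by rewrite -IHx !(st_mul hstarB) hES !mulrA !EEs' EEs.
Qed.

Lemma corner_span m b : (m < size incs)%N ->
  n%:R * psi (nceval (E e1 e1) starB (W (iA (xm m))) b) = 0 ->
  SpanRed m (nceval (E e1 e1) starB (W (iA (xm m))) b).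
Proof.
move=> hm; set x := nceval _ _ _ b; move=> hz.
have hDS : DS m x.
  rewrite /x trans_ok; apply: DS_sum => p; apply: DS_scale.
  rewrite evF_evL; apply: reduce; exact: toE_wf.
case: hDS => d [y [hd hy hxy]].
have hc : exists c, E e1 e1 * d * E e1 e1 = c *: E e1 e1 by apply: hd.
case: hc => c hc.
have hx : x = c *: E e1 e1 + E e1 e1 * y * E e1 e1.
  have h0 : x = E e1 e1 * x * E e1 e1 by rewrite /x nceval_corner.
  by rewrite {1}h0 hxy mulrDr mulrDl hc.
have hs : SpanRed m (E e1 e1 * y * E e1 e1).
  apply: SpanRed_capR; first exact: Dspan_E.
  apply: SpanRed_capL => //; exact: Dspan_E.
have hc0 : c = 0.
  move: hz; rewrite hx (ph_add hpsi) (SpanRed_psi hs) addr0 (ph_scale hpsi) hEtr eqxx mul1r.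
  rewrite mulrCA divff ?mulr1 //; exact: n_neq0.
by rewrite hx hc0 scale0r add0r.
Qed.

Definition lastX (P : seq (nat * B)) := last 0%N [seq k <- map fst P | k != 0%N].

Lemma last_in (x : nat) s : s <> [::] -> last x s \in s.
Proof. by case: s => [|h t] // _; rewrite /= mem_last. Qed.

Lemma lastX_catR m P R : wfm m R -> hasX R -> lastX (P ++ R) = m.+1.
Proof.
move=> hw hX; rewrite /lastX map_cat filter_cat last_cat.
set s := [seq k <- map fst R | k != 0%N].
have hs : s <> [::] by move=> h; move: hX; rewrite /hasX has_filter -/s h.
have := last_in (last 0%N [seq k <- map fst P | k != 0%N]) hs.
rewrite mem_filter => /andP [hk /mapP [p hp hkp]].
rewrite hkp in hk *.
case: (hw p hp) => _ [h|h] //; by rewrite h in hk.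
Qed.

Lemma lastX_rconsD P0 d : lastX (rcons P0 (0%N, d)) = lastX P0.
Proof. by rewrite /lastX map_rcons filter_rcons. Qed.

Lemma lastX_last P0 : last 0%N (map fst P0) != 0%N -> lastX P0 = last 0%N (map fst P0).
Proof.
case/lastP: P0 => [|Q q] //; rewrite map_rcons last_rcons => h.
by rewrite /lastX map_rcons filter_rcons h last_rcons.
Qed.

Lemma adjn_rcons_last s a : adjn (rcons s a) -> s = [::] \/ last 0%N s != a.
Proof.
elim: s => [|b s IH] /=; first by left.
case: s IH => [|c s] IH /=; first by rewrite andbT => h; right.
by case/andP => _ /IH [] // h; right.
Qed.

Lemma okc_cat P Q : okc P -> okc Q -> okc (P ++ Q).
Proof. by move=> h1 h2 p; rewrite mem_cat => /orP [/h1|/h2]. Qed.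

Lemma Red0_okc m R : Red0 m R -> okc R.
Proof. by case=> _ hw hc _ _ p hp; split; [case: (hw p hp)|apply: hc]. Qed.

Lemma okc_sub P Q : okc P -> {subset Q <= P} -> okc Q.
Proof. by move=> h hs p /hs /h. Qed.

Lemma wfm_label m R p : wfm m R -> p \in R -> p.1 = 0%N \/ p.1 = m.+1.
Proof. by move=> hw /hw []. Qed.

Lemma chain_step m (P R xs : seq (nat * B)) :
  (forall P', P' <> [::] -> okc P' -> adjn (map fst P') -> lastX P' = m.+1 ->
      psi (evL P' * \prod_(q <- xs) q.2) = 0) ->
  okc P -> adjn (map fst P) -> lastX P != m.+1 -> Red0 m R ->
  psi (evL P * (evL R * \prod_(q <- xs) q.2)) = 0.
Proof.
move=> IH hok hadj hlast hR.
have hR' := hR; case: hR' => hne hw hc ha hX.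
case: R hR hne hw hc ha hX => [|r R1] hR hne hw hc ha hX //.
have hr : r \in r :: R1 by rewrite mem_head.
have hR1 : forall q, q \in R1 -> q \in r :: R1 by move=> q hq; rewrite inE hq orbT.
case/lastP: P hok hadj hlast => [|P0 p] hok hadj hlast.
  have -> : evL [::] = 1 by rewrite /evL big_nil.
  rewrite mul1r; apply: IH => //.
  - exact: Red0_okc hR.
  - by rewrite -[r :: R1]cat0s (lastX_catR _ hw hX).
have hp : p \in rcons P0 p by rewrite mem_rcons mem_head.
case hj : ((p.1 == 0%N) && (r.1 == 0%N)); last first.
  rewrite mulrA -evL_cat; apply: IH.
  - by case: P0 {hok hadj hlast hp}.
  - by apply: okc_cat => //; exact: Red0_okc hR.
  - rewrite map_cat; apply: adjn_cat => //; right; right.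
    rewrite map_rcons last_rcons /=.
    case hp0 : (p.1 == 0%N); first by move: hj; rewrite hp0 /= => /negbT; rewrite (eqP hp0) eq_sym.
    have := @lastX_last (rcons P0 p); rewrite map_rcons last_rcons hp0 => /(_ isT) hl.
    case: (wfm_label hw hr) => ->; first by rewrite hp0.
    by rewrite -hl.
  - exact: lastX_catR hw hX.
move/andP: hj => [/eqP hp0 /eqP hr0].
have [hpi _] := hok p hp.
have [hri _] := hw r hr.
have hpD : Dspan p.2 by move: hpi; rewrite /itok hp0.
have hrD : Dspan r.2 by move: hri; rewrite /itok hr0.
have he : Dspan (p.2 * r.2) by apply: Dspan_mul.
set e := p.2 * r.2.
set c := psi e.
have hR1ne : R1 <> [::] by move=> h; move: hX; rewrite h /hasX /= hr0.
have hXR1 : hasX R1 by move: hX; rewrite /hasX /= hr0.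
have hwR1 : wfm m R1 by move=> q hq; apply: hw; rewrite hR1.
have hokR1 : okc R1 by apply: okc_sub (Red0_okc hR) _.
have haR1 : adjn (map fst R1) by exact: adjn_cons ha.
have hP0 : okc P0 by apply: okc_sub hok _ => q hq; rewrite mem_rcons inE hq orbT.
have haP0 : adjn (map fst P0) by move: hadj; rewrite map_rcons => /adjn_rcons_l.
have hlP0 : P0 = [::] \/ last 0%N (map fst P0) != 0%N.
  move: hadj; rewrite map_rcons hp0 => /adjn_rcons_last [h|h]; [left|right] => //.
  by case: P0 {hok hlast hp hP0 haP0} h.
have hlX : P0 = [::] \/ last 0%N (map fst P0) != m.+1.
  case: hlP0 => [->|h]; [by left|right].
  by rewrite -(lastX_last h) -(lastX_rconsD P0 p.2) -hp0 -surjective_pairing.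
have -> : evL (rcons P0 p) * (evL (r :: R1) * \prod_(q <- xs) q.2) =
   evL (P0 ++ (0%N, e - c *: 1) :: R1) * \prod_(q <- xs) q.2 +
   c *: (evL (P0 ++ R1) * \prod_(q <- xs) q.2).
  rewrite evL_rcons evL_cons !evL_cat evL_cons /= mulrBl -scalerAl mul1r.
  rewrite mulrBr mulZB mulrBl -scalerAl subrK.
  by rewrite /e !mulrA.
rewrite (ph_add hpsi) (ph_scale hpsi).
have hcen := Red0_cen_sub m he.
rewrite IH //; first rewrite IH //.
- by rewrite mulr0 addr0.
- by case: (P0) => [|? ?] //=.
- by apply: okc_cat.
- rewrite map_cat; apply: adjn_cat => //.
  case: hlX => [->|h]; [by left|right; right].
  have hq : head 0%N (map fst R1) = m.+1.
    case E1 : R1 => [|q R2]; first by rewrite E1 in hR1ne.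
    have hqi : q \in R1 by rewrite E1 mem_head.
    move: ha; rewrite E1 /= hr0 => /andP [hq0 _].
    by case: (hwR1 q hqi) => _ [e0|e0] //; rewrite e0 in hq0.
  by rewrite hq.
- exact: lastX_catR.
- by case: (P0).
- apply: okc_cat => //; move=> q; rewrite inE => /orP [/eqP -> |/hokR1 //].
  by case: hcen => [[h1 _] h2].
- rewrite map_cat; apply: adjn_cat => //.
    by move: ha; rewrite /= hr0.
  case: hlP0 => [->|h]; [by left|by right; right].
- apply: lastX_catR; last by rewrite /hasX /=.
  move=> q; rewrite inE => /orP [/eqP -> //|/hwR1 //]; by case: hcen.
Qed.

Lemma chain (xs : seq (nat * B)) : (forall q, q \in xs -> SpanRed q.1 q.2) -> adjn (map fst xs) ->
  forall P, (P <> [::] \/ xs <> [::]) -> okc P -> adjn (map fst P) ->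
  (xs = [::] \/ lastX P != (head 0%N (map fst xs)).+1) ->
  psi (evL P * \prod_(q <- xs) q.2) = 0.
Proof.
elim: xs => [|[m x] xs IH] hsp hax P hne hok hadj hl.
  rewrite big_nil mulr1; apply: MF => //; by case: hne.
have [r [hr hx]] := hsp (m, x) (mem_head _ _); simpl in hx.
rewrite big_cons /= hx mulr_suml mulr_sumr (ph_sum hpsi) big1_seq // => q /andP [_ hq].
rewrite -scalerAl mulZB (ph_scale hpsi).
have -> : psi (evL P * (evL q.2 * \prod_(q0 <- xs) q0.2)) = 0; last by rewrite mulr0.
apply: (@chain_step m) => //.
- move=> P' h1 h2 h3 h4; apply: (IH) => //.
  + by move=> q' hq'; apply: hsp; rewrite inE hq' orbT.
  + exact: adjn_cons hax.
  + by left.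
  + clear -hax h4; case: xs hax => [|[m' x'] xs'] /= hax; first by left.
    by right; rewrite h4 eqSS; case/andP: hax.
- by case: hl.
- exact: hr.
Qed.

Lemma cond4_incs : free_family (fun x => n%:R * psi x)
  [seq hom_image (E e1 e1) starB (W (iA x)) | x <- incs].
Proof.
move=> s hs hin hpath.
have hsp : forall q, q \in s -> SpanRed q.1 q.2.
  move=> q hq; have [h1 h2 h3] := hin q hq.
  rewrite size_map in h1.
  move: h2; rewrite (nth_map 0) // => [[b hb]].
  rewrite hb; apply: corner_span => //; by rewrite -hb.
have := @chain s hsp _ [::] _ _ _ _.
have -> : evL [::] = 1 by rewrite /evL big_nil.
rewrite mul1r => ->; first by rewrite mulr0.
- by case: s hs hpath {hin hsp} => [|h t] //= _; rewrite -adjn_path.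
- by right; case: s hs {hin hsp hpath}.
- by move=> p.
- by [].
- by right.
Qed.
End Cond4.
Lemma increments_map (X Y : Type) (f : R -> X) (g : R -> R -> X) (h : X -> Y)
  (f' : R -> Y) (g' : R -> R -> Y) ts :
  (forall t, f' t = h (f t)) -> (forall s t, g' s t = h (g s t)) ->
  increments f' g' ts = map h (increments f g ts).
Proof.
move=> hf hg; case: ts => [|t rest] //=; rewrite hf; congr (_ :: _).
by elim: rest t => [|u rest IH] t //=; rewrite hg IH.
Qed.

Lemma conv_W_fun s t :
  conv_gen (antipode_gen starB (W (iA (U s)))) (W (iA (U t))) = W (iA (starA (U s) * U t)).
Proof.
apply: functional_extensionality => i; apply: functional_extensionality => k.
by rewrite conv_W hiAM hiAS.
Qed.

Lemma main_sec : free_levy_Un starB (E e1 e1) (fun x => n%:R * psi x)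
    (fun t i j => E e1 i * iA (U t) * E j e1).
Proof.
have hU' := hU; case: hU' => hunit hU0 hdist hfreeU hcont.
split.
- move=> t ht; case: (hunit t ht) => h1 h2; apply: W_unc.
  + by rewrite -hiAS -hiAM h1 hiA1.
  + by rewrite -hiAS -hiAM h2 hiA1.
- move=> i k; rewrite hU0 hiA1; exact: W1.
- move=> s t hs hst b.
  have -> : conv_gen (antipode_gen starB (fun i j => E e1 i * iA (U s) * E j e1))
      (fun i j => E e1 i * iA (U t) * E j e1) = W (iA (starA (U s) * U t)) by exact: conv_W_fun.
  congr (_ * _).
  apply: (same_moments (a2 := U (Rminus t s))) => w.
  have h := hdist s t R0 (Rminus t s) hs hst ltac:(lra) ltac:(lra) ltac:(lra).
  by rewrite h hU0 (st1 hstarA) mul1r.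
- move=> ts hts.
  rewrite (@increments_map A _ U (fun s t => starA (U s) * U t) (fun x => W (iA x))); last first.
  + by move=> s t; rewrite /= -conv_W_fun.
  + by [].
  rewrite -map_comp.
  exact: (cond4_incs (hfreeU ts hts)).
- move=> b eps he; exact: cond5.
Qed.
End Main.

Theorem mainTheorem13
  (C : numClosedFieldType)
  (* the noncommutative probability space (A, phi) and the process U *)
  (A : lalgType C) (starA : A -> A) (phi : A -> C)
  (hstarA : is_star starA) (hphi : is_state phi)
  (U : R -> A) (hU : free_unitary_levy starA phi U)
  (* a realisation (B, psi) of the free product (A |_| M_n(C), phi * tr_n) *)
  (n : nat) (hn : (0 < n)%N)
  (B : lalgType C) (starB : B -> B) (psi : B -> C)
  (hstarB : is_star starB) (hpsi : is_state psi)
  (iA : A -> B)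
  (hiA1 : iA 1 = 1)
  (hiAM : forall x y, iA (x * y) = iA x * iA y)
  (hiAL : forall (a : C) x y, iA (a *: x + y) = a *: iA x + iA y)
  (hiAS : forall x, iA (starA x) = starB (iA x))
  (hiAphi : forall x, psi (iA x) = phi x)
  (E : 'I_n -> 'I_n -> B)
  (hEM : forall i j k l, E i j * E k l = (j == k)%:R *: E i l)
  (hE1 : \sum_i E i i = 1)
  (hES : forall i j, starB (E i j) = E j i)
  (hEtr : forall i j, psi (E i j) = (i == j)%:R / n%:R)
  (hfree : free_family psi
     [:: salg 1 starB (fun x => exists a, x = iA a);
         salg 1 starB (fun x => exists i j, x = E i j)]) :
  let e1 := Ordinal hn in
  free_levy_Un starB (E e1 e1) (fun x => n%:R * psi x)
    (fun t i j => E e1 i * iA (U t) * E j e1).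
Proof.
exact: (main_sec hstarA hphi hU hn hstarB hpsi hiA1 hiAM hiAL hiAS hiAphi hEM hE1 hES hEtr hfree).
Qed.
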